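(* Let $a \in \mathbb{R}$ and $w \in \mathbb{C}\setminus\{0\}$ with $(a,w) \in D_c$. Then the equation $z + a - w e^{-\tau z} = 0$ with $\tau = \tau_c(a,w)$ has no roots with positive real part and has at least one root on the imaginary axis.
   Context: $D_c := \{(a,w) \in \mathbb{R}\times(\mathbb{C}\setminus\{0\}) : \operatorname{Re}(w) < a < |w|\}$. For $(a,w) \in D_c$, $\tau_c(a,w) := \frac{1}{\sqrt{|w|^2-a^2}}\left[|\operatorname{Arg}(w)| - \arccos(a/|w|)\right] > 0$, where $\operatorname{Arg}(w)\in(-\pi,\pi]$ is the principal argument and $\arccos:[-1,1]\to[0,\pi]$. *)

(* Defs.v *)
From Stdlib Require Import Reals.
From Coquelicot Require Import Complex.
Open Scope R_scope.

Definition Cexp (z : C) : C :=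
  (exp (Re z) * cos (Im z), exp (Re z) * sin (Im z)).

(* Principal argument Arg(w) in (-pi, pi] for w <> 0 (standard formula via
   arccos : [-1,1] -> [0,pi]); the value at w = 0 is irrelevant. *)
Definition Arg (w : C) : R :=
  if Rle_dec 0 (Im w) then acos (Re w / Cmod w) else - acos (Re w / Cmod w).

Definition D_c (a : R) (w : C) : Prop :=
  w <> 0%C /\ Re w < a /\ a < Cmod w.

Definition tau_c (a : R) (w : C) : R :=
  / sqrt (Cmod w ^ 2 - a ^ 2) * (Rabs (Arg w) - acos (a / Cmod w)).

Definition charf (a : R) (w : C) (tau : R) (z : C) : C :=
  (z + RtoC a - w * Cexp (- (RtoC tau * z)))%C.

(* Main.v *)
Require Import Defs.
From Stdlib Require Import Reals Lra Psatz.
From Coquelicot Require Import Coquelicot.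
Open Scope R_scope.

Lemma acos_deriv x : -1 < x < 1 -> is_derive acos x (-1 / sqrt (1 - x²)).
Proof.
  intros Hx. apply is_derive_Reals.
  apply derive_pt_eq_1 with (derivable_pt_acos x Hx). apply derive_pt_acos.
Qed.

Lemma acos_decr x y : -1 <= x <= 1 -> -1 <= y <= 1 -> x < y -> acos y < acos x.
Proof.
  intros Hx Hy Hxy.
  destruct (Rlt_or_le (acos y) (acos x)) as [H|H]; auto. exfalso.
  pose proof (acos_bound x); pose proof (acos_bound y).
  destruct (Rle_lt_or_eq_dec _ _ H) as [H'|H'].
  - pose proof (cos_decreasing_1 (acos x) (acos y) ltac:(lra) ltac:(lra) ltac:(lra) ltac:(lra) H') as Hc.
    rewrite !cos_acos in Hc; lra.
  - apply (f_equal cos) in H'. rewrite !cos_acos in H'; lra.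
Qed.

Lemma tcos_lt_sin t : 0 < t < PI -> t * cos t < sin t.
Proof.
  intros Ht.
  destruct (MVT_cor2 (fun s => sin s - s * cos s) (fun s => s * sin s) 0 t) as [c [Hc1 Hc2]].
  - lra.
  - intros c _. apply is_derive_Reals. auto_derive; auto. ring.
  - rewrite sin_0, cos_0 in Hc1.
    assert (0 < sin c) by (apply sin_gt_0; lra).
    assert (0 < c * sin c * (t - 0)) by (apply Rmult_lt_0_compat; [apply Rmult_lt_0_compat|]; lra).
    lra.
Qed.

Definition rho (r tau a t : R) := r * exp (tau * (a - t)).
Definition Hf (r tau a t : R) := acos (t / rho r tau a t) + tau * sqrt (rho r tau a t ^ 2 - t ^ 2).

Lemma Hf_deriv r tau a t : 0 < r -> t ^ 2 < rho r tau a t ^ 2 ->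
  is_derive (Hf r tau a) t
   (- (1 + 2 * tau * t + tau ^ 2 * rho r tau a t ^ 2) / sqrt (rho r tau a t ^ 2 - t ^ 2)).
Proof.
  intros Hr Ht.
  assert (Hrho : 0 < rho r tau a t) by (unfold rho; apply Rmult_lt_0_compat; [lra| apply exp_pos]).
  assert (Hq : -1 < t / rho r tau a t < 1).
  { split; [apply Rlt_div_r | apply Rlt_div_l]; nra. }
  unfold Hf, rho in *.
  auto_derive; change (a + - t) with (a - t);
  set (e := exp (tau * (a - t))) in *; set (R := r * e) in *.
  - repeat split; try nra. exists (-1 / sqrt (1 - (t / R)²)).
    replace (t * / R) with (t / R) by reflexivity. apply acos_deriv; auto.
  - replace (t * / R) with (t / R) by reflexivity.
    match goal with |- context [Derive ?f ?x] => replace (Derive f x) with (-1 / sqrt (1 - (t / R)²)) by (symmetry; apply is_derive_unique; apply acos_deriv; auto) end.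
    assert (Hs : 0 < sqrt (R ^ 2 - t ^ 2)) by (apply sqrt_lt_R0; lra).
    assert (Hk : sqrt (1 - (t / R)²) = sqrt (R ^ 2 - t ^ 2) / R).
    { apply sqrt_lem_1.
      - unfold Rsqr. assert ((t/R)*(t/R) < 1) by (destruct Hq; nra). lra.
      - apply Rlt_le, Rdiv_lt_0_compat; lra.
      - unfold Rsqr. replace (sqrt (R ^ 2 - t ^ 2) / R * (sqrt (R ^ 2 - t ^ 2) / R)) with
          ((sqrt (R ^ 2 - t ^ 2) * sqrt (R ^ 2 - t ^ 2)) / (R * R)) by (field; lra).
        rewrite sqrt_sqrt by lra. field; lra. }
    rewrite Hk.
    replace (R * (R * 1) + - (t * (t * 1))) with (R ^ 2 - t ^ 2) by ring.
    unfold R. field. split; [|split]; try lra. unfold R in Hs. lra. unfold e. apply Rgt_not_eq, exp_pos.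
Qed.

Lemma Hf_decr r tau a u : 0 < r -> 0 < tau -> a < u ->
  (forall t, a <= t <= u -> t ^ 2 < rho r tau a t ^ 2) -> Hf r tau a u < Hf r tau a a.
Proof.
  intros Hr Htau Hau Hall.
  destruct (MVT_cor2 (Hf r tau a)
    (fun t => - (1 + 2 * tau * t + tau ^ 2 * rho r tau a t ^ 2) / sqrt (rho r tau a t ^ 2 - t ^ 2)) a u)
    as [c [Hc1 Hc2]]; auto.
  - intros c Hc. apply is_derive_Reals. apply Hf_deriv; auto.
  - assert (Hcc := Hall c ltac:(lra)).
    assert (Hs : 0 < sqrt (rho r tau a c ^ 2 - c ^ 2)) by (apply sqrt_lt_R0; lra).
    assert (Hn : 0 < 1 + 2 * tau * c + tau ^ 2 * rho r tau a c ^ 2).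
    { assert (tau ^ 2 * c ^ 2 < tau ^ 2 * rho r tau a c ^ 2) by (apply Rmult_lt_compat_l; nra).
      assert (0 <= (1 + tau * c) ^ 2) by apply pow2_ge_0. nra. }
    assert (0 < (1 + 2 * tau * c + tau ^ 2 * rho r tau a c ^ 2) / sqrt (rho r tau a c ^ 2 - c ^ 2) * (u - a))
      by (apply Rmult_lt_0_compat; [apply Rdiv_lt_0_compat|]; lra).
    assert (Hc3 : Hf r tau a u - Hf r tau a a = - ((1 + 2 * tau * c + tau ^ 2 * rho r tau a c ^ 2) / sqrt (rho r tau a c ^ 2 - c ^ 2) * (u - a)))
      by (rewrite Hc1; field; lra).
    lra.
Qed.

Lemma rho_lower r tau a t : 0 < r -> 0 < tau -> -r < a -> (a < 0 -> tau * (- a) < 1) ->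
  a <= t <= 0 -> - t < rho r tau a t.
Proof.
  intros Hr Htau Ha Hta Ht.
  assert (Hrho : 0 < rho r tau a t) by (unfold rho; apply Rmult_lt_0_compat; [lra| apply exp_pos]).
  destruct (Rle_or_lt 0 a) as [Ha0|Ha0]; [lra|].
  specialize (Hta Ha0).
  assert (He : r * (1 + tau * (a - t)) <= rho r tau a t)
    by (unfold rho; apply Rmult_le_compat_l; [lra| apply exp_ineq1_le]).
  set (f := fun s => r * (1 + tau * (a - s)) + s).
  assert (fa : 0 < f a) by (unfold f; lra).
  assert (f0 : 0 < f 0) by (unfold f; nra).
  assert (Hid : f t * (- a) = f a * (- t) + f 0 * (t - a)) by (unfold f; ring).
  assert (0 < f a * (- t) + f 0 * (t - a)).
  { destruct (Req_dec t a) as [->|Hne].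
    - assert (0 < f a * (- a)) by (apply Rmult_lt_0_compat; lra).
      assert (0 <= f 0 * (a - a)) by (apply Rmult_le_pos; lra). lra.
    - assert (0 <= f a * (- t)) by (apply Rmult_le_pos; lra).
      assert (0 < f 0 * (t - a)) by (apply Rmult_lt_0_compat; lra). lra. }
  assert (0 < f t) by nra.
  unfold f in *. lra.
Qed.

Theorem mainTheorem2 (a : R) (w : C) :
  D_c a w ->
  (forall z : C, charf a w (tau_c a w) z = 0%C -> Re z <= 0) /\
  (exists z : C, Re z = 0 /\ charf a w (tau_c a w) z = 0%C).
Proof.
  intros [Hw0 [Hpa Har]]. destruct w as [p q]. unfold Re in Hpa; simpl in Hpa.
  assert (Hr2 : Cmod (p, q) ^ 2 = p ^ 2 + q ^ 2).
  { unfold Cmod; cbn [fst snd]. rewrite pow2_sqrt; [ring|]. nra. }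
  assert (Hr0 := Cmod_ge_0 (p, q)).
  assert (HPhi : Rabs (Arg (p, q)) = acos (p / Cmod (p, q))).
  { unfold Arg; simpl. pose proof (acos_bound (p / Cmod (p, q))).
    destruct Rle_dec; [rewrite Rabs_pos_eq | rewrite Rabs_Ropp, Rabs_pos_eq]; lra. }
  unfold tau_c. rewrite HPhi.
  set (r := Cmod (p, q)) in *.
  assert (Hpr : - r <= p) by nra.
  assert (Hr : 0 < r) by lra.
  set (Phi := acos (p / r)). set (th := acos (a / r)). set (om := sqrt (r ^ 2 - a ^ 2)).
  set (tau := / om * (Phi - th)).
  assert (Hp1 : -1 <= p / r) by (apply Rle_div_r; lra).
  assert (Hpa1 : p / r < a / r) by (apply Rmult_lt_compat_r; [apply Rinv_0_lt_compat|]; lra).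
  assert (Ha1 : a / r < 1) by (apply Rlt_div_l; lra).
  assert (Hthphi : th < Phi) by (apply acos_decr; lra).
  assert (Hth0 : 0 < th) by (rewrite <- acos_1; unfold th; apply acos_decr; lra).
  assert (HthPI : th < PI).
  { replace PI with (acos (- (1))) by (rewrite acos_opp, acos_1; ring). apply acos_decr; lra. }
  assert (HPhiPI : Phi <= PI) by apply acos_bound.
  assert (Hom : 0 < om) by (apply sqrt_lt_R0; nra).
  assert (Htau : 0 < tau) by (unfold tau; apply Rmult_lt_0_compat; [apply Rinv_0_lt_compat|]; lra).
  assert (Htauom : tau * om = Phi - th) by (unfold tau; field; lra).
  assert (Hcth : cos th = a / r) by (apply cos_acos; lra).
  assert (Hsth : sin th = om / r).
  { unfold th; rewrite sin_acos by lra. apply sqrt_lem_1.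
    - unfold Rsqr. assert ((a/r)*(a/r) < 1). { assert (-1 < a/r) by lra. nra. } lra.
    - apply Rlt_le, Rdiv_lt_0_compat; lra.
    - unfold Rsqr, om. replace (sqrt (r ^ 2 - a ^ 2) / r * (sqrt (r ^ 2 - a ^ 2) / r)) with
          ((sqrt (r ^ 2 - a ^ 2) * sqrt (r ^ 2 - a ^ 2)) / (r * r)) by (field; lra).
      rewrite sqrt_sqrt by nra. field; lra. }
  assert (Hom2 : om ^ 2 = r ^ 2 - a ^ 2) by (unfold om; rewrite pow2_sqrt; nra).
  assert (HcPhi : cos Phi = p / r) by (apply cos_acos; lra).
  assert (HsPhi : sin Phi = Rabs q / r).
  { unfold Phi; rewrite sin_acos by lra. apply sqrt_lem_1.
    - unfold Rsqr. assert (p ^ 2 <= r ^ 2) by nra.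
      assert ((p/r)*(p/r) <= 1). { replace ((p/r)*(p/r)) with (p^2/r^2) by (field; lra).
        apply Rle_div_l; nra. } lra.
    - apply Rdiv_le_0_compat; [apply Rabs_pos|lra].
    - unfold Rsqr. replace (Rabs q / r * (Rabs q / r)) with (Rabs q ^ 2 / r ^ 2) by (field; lra).
      rewrite pow2_abs. replace (1 - p/r*(p/r)) with ((r^2 - p^2)/r^2) by (field; lra).
      rewrite Hr2. field; nra. }
  split.
  { intros [x y] Hz. unfold Re; simpl. destruct (Rle_or_lt x 0) as [|Hx]; [auto|exfalso].
    pose proof (f_equal fst Hz) as H1; pose proof (f_equal snd Hz) as H2.
    unfold charf, Cexp in H1, H2; simpl in H1, H2.
    replace (- (tau * x - 0 * y)) with (tau * (a - (x + a))) in H1, H2 by ring.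
    replace (- (tau * y + 0 * x)) with (- (tau * y)) in H1, H2 by ring.
    rewrite cos_neg, sin_neg in H1, H2.
    set (u := x + a) in *.
    set (E := exp (tau * (a - u))) in *.
    set (C := cos (tau * y)) in *. set (S := sin (tau * y)) in *.
    assert (HE : 0 < E) by apply exp_pos.
    assert (Hua : a < u) by (unfold u; lra).
    assert (HCS : S ^ 2 + C ^ 2 = 1) by (unfold S, C; rewrite <- (sin2_cos2 (tau * y)); unfold Rsqr; ring).
    assert (Hu : u = E * (p * C + q * S)) by lra.
    assert (Hy : y = E * (q * C - p * S)) by lra.
    assert (Hrho : rho r tau a u = r * E) by reflexivity.
    assert (Huy : u ^ 2 + y ^ 2 = (r * E) ^ 2).
    { replace (u ^ 2 + y ^ 2) with (E ^ 2 * (p ^ 2 + q ^ 2) * (S ^ 2 + C ^ 2)) by (rewrite Hu, Hy; ring).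
      rewrite HCS, <- Hr2. ring. }
    assert (Hkey : u * C - y * S = E * p).
    { replace (u * C - y * S) with (E * p * (S ^ 2 + C ^ 2)) by (rewrite Hu, Hy; ring). rewrite HCS; ring. }
    assert (HrE : 0 < r * E) by (apply Rmult_lt_0_compat; lra).
    assert (Hsq : sqrt (rho r tau a u ^ 2 - u ^ 2) = Rabs y).
    { apply sqrt_lem_1; [rewrite Hrho; nra | apply Rabs_pos |].
      rewrite Hrho. rewrite <- Rabs_mult, Rabs_pos_eq by nra. nra. }
    assert (Hub : -1 <= u / (r * E) <= 1).
    { assert (u ^ 2 <= (r * E) ^ 2) by nra.
      split; [apply Rle_div_r | apply Rle_div_l]; nra. }
    assert (HcosH : cos (Hf r tau a u) = p / r).
    { unfold Hf. rewrite Hsq, Hrho, cos_plus, cos_acos, sin_acos by auto.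
      assert (Hs2 : sqrt (1 - (u / (r * E))²) = Rabs y / (r * E)).
      { apply sqrt_lem_1.
        - unfold Rsqr. assert ((u/(r*E))*(u/(r*E)) <= 1). { destruct Hub; nra. } lra.
        - apply Rdiv_le_0_compat; [apply Rabs_pos|lra].
        - unfold Rsqr. replace (Rabs y / (r * E) * (Rabs y / (r * E))) with (Rabs y ^ 2 / (r * E) ^ 2) by (field; lra).
          rewrite pow2_abs. replace (1 - u / (r * E) * (u / (r * E))) with (((r * E) ^ 2 - u ^ 2) / (r * E) ^ 2) by (field; lra).
          f_equal. lra. }
      rewrite Hs2.
      assert (Hc2 : cos (tau * Rabs y) = C /\ Rabs y * sin (tau * Rabs y) = y * S).
      { unfold C, S. destruct (Rle_or_lt 0 y).
        - rewrite Rabs_pos_eq by lra. auto.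
        - rewrite Rabs_left by lra. replace (tau * - y) with (- (tau * y)) by ring.
          rewrite cos_neg, sin_neg. split; [auto|ring]. }
      destruct Hc2 as [Hc2 Hs3].
      replace (Rabs y / (r * E) * sin (tau * Rabs y)) with ((Rabs y * sin (tau * Rabs y)) / (r * E)) by (field; lra).
      rewrite Hc2, Hs3.
      replace (u / (r * E) * C - y * S / (r * E)) with ((u * C - y * S) / (r * E)) by (field; lra).
      rewrite Hkey. field; lra. }
    assert (Hta : a < 0 -> tau * (- a) < 1).
    { intros Ha0.
      assert (Ht := tcos_lt_sin (PI - th) ltac:(lra)).
      rewrite sin_PI_x, cos_minus, cos_PI, sin_PI, Hcth, Hsth in Ht.
      assert (H3 : (PI - th) * (- a) < om).
      { replace (- a) with (r * -(a / r)) by (field; lra).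
        replace om with (r * (om / r)) by (field; lra).
        assert (r * ((PI - th) * - (a / r)) < r * (om / r)).
        { apply Rmult_lt_compat_l; [lra|]. replace ((PI - th) * - (a / r)) with ((PI - th) * (-1 * (a / r) + 0 * (om / r))) by ring. exact Ht. }
        lra. }
      assert (H4 : (Phi - th) * (- a) <= (PI - th) * (- a)) by (apply Rmult_le_compat_r; lra).
      replace (tau * - a) with ((Phi - th) * (- a) / om) by (unfold tau; field; lra).
      apply Rlt_div_l; lra. }
    assert (HfA : Hf r tau a a = Phi).
    { unfold Hf, rho. rewrite Rminus_diag, Rmult_0_r, exp_0, Rmult_1_r. fold om. fold th. lra. }
    assert (Hlow : forall t, a <= t <= 0 -> - t < rho r tau a t).
    { intros t Ht. apply rho_lower; auto. lra. }
    assert (Hfa0 : 0 <= Hf r tau a u).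
    { unfold Hf. pose proof (acos_bound (u / rho r tau a u)).
      assert (0 <= sqrt (rho r tau a u ^ 2 - u ^ 2)) by apply sqrt_pos. nra. }
    destruct (Req_dec y 0) as [Hy0|Hy0].
    - rewrite Hy0 in Huy.
      destruct (Rle_or_lt 0 u) as [Hu0|Hu0].
      + assert (Hur : u = r * E) by nra.
        assert (Hf r tau a u = 0).
        { unfold Hf. rewrite Hsq, Hy0, Rabs_R0, Hrho, <- Hur, Rdiv_diag by lra. rewrite acos_1. ring. }
        rewrite H, cos_0 in HcosH.
        assert (p = r) by (apply (Rmult_eq_reg_r (/ r)); [| apply Rinv_neq_0_compat; lra]; unfold Rdiv in HcosH; rewrite Rinv_r; lra).
        lra.
      + assert (Hur : u = - (r * E)) by nra.
        assert (Hl := Hlow u ltac:(lra)). rewrite Hrho in Hl. lra.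
    - assert (Hall : forall t, a <= t <= u -> t ^ 2 < rho r tau a t ^ 2).
      { intros t Ht.
        assert (Hrt : 0 < rho r tau a t) by (unfold rho; apply Rmult_lt_0_compat; [lra|apply exp_pos]).
        destruct (Rle_or_lt t 0) as [Ht0|Ht0].
        - assert (Hl := Hlow t ltac:(lra)). nra.
        - assert (Hmono : rho r tau a u <= rho r tau a t).
          { unfold rho. apply Rmult_le_compat_l; [lra|]. destruct (Req_dec t u) as [->|Hne]; [lra| apply Rlt_le, exp_increasing]. assert (t < u) by lra. nra. }
          assert (u ^ 2 < (r * E) ^ 2) by (assert (0 < y ^ 2) by (apply pow2_gt_0; auto); lra).
          rewrite Hrho in Hmono. nra. }
      assert (Hlt := Hf_decr r tau a u Hr Htau ltac:(lra) Hall).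
      rewrite HfA in Hlt.
      assert (Hc := cos_decreasing_1 (Hf r tau a u) Phi Hfa0 ltac:(lra) ltac:(lra) HPhiPI Hlt).
      lra. }
  assert (Hcd : cos (Phi - th) = (p * a + Rabs q * om) / r ^ 2)
    by (rewrite cos_minus, HcPhi, HsPhi, Hcth, Hsth; field; lra).
  assert (Hsd : sin (Phi - th) = (Rabs q * a - p * om) / r ^ 2)
    by (rewrite sin_minus, HcPhi, HsPhi, Hcth, Hsth; field; lra).
  destruct (Rle_or_lt 0 q) as [Hq|Hq].
  - exists (0, om). split; [reflexivity|].
    rewrite Rabs_pos_eq in Hcd, Hsd by lra.
    unfold charf, Cexp. apply injective_projections; simpl.
    + replace (- (tau * 0 - 0 * om)) with 0 by ring. replace (- (tau * om + 0 * 0)) with (- (Phi - th)) by lra.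
      rewrite exp_0, cos_neg, sin_neg, Hcd, Hsd.
      apply (Rmult_eq_reg_r (r^2)); [| nra]. rewrite Rmult_0_l. field_simplify; [| nra].
      rewrite Hr2; ring.
    + replace (- (tau * 0 - 0 * om)) with 0 by ring. replace (- (tau * om + 0 * 0)) with (- (Phi - th)) by lra.
      rewrite exp_0, cos_neg, sin_neg, Hcd, Hsd.
      apply (Rmult_eq_reg_r (r^2)); [| nra]. rewrite Rmult_0_l. field_simplify; [| nra].
      rewrite Hr2; ring.
  - exists (0, - om). split; [reflexivity|].
    rewrite Rabs_left in Hcd, Hsd by lra.
    unfold charf, Cexp. apply injective_projections; simpl.
    + replace (- (tau * 0 - 0 * - om)) with 0 by ring. replace (- (tau * - om + 0 * 0)) with (Phi - th) by lra.
      rewrite exp_0, Hcd, Hsd.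
      apply (Rmult_eq_reg_r (r^2)); [| nra]. rewrite Rmult_0_l. field_simplify; [| nra].
      rewrite Hr2; ring.
    + replace (- (tau * 0 - 0 * - om)) with 0 by ring. replace (- (tau * - om + 0 * 0)) with (Phi - th) by lra.
      rewrite exp_0, Hcd, Hsd.
      apply (Rmult_eq_reg_r (r^2)); [| nra]. rewrite Rmult_0_l. field_simplify; [| nra].
      rewrite Hr2; ring.
Qed.
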